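(* Let $G$ be a graph with $n$ vertices and let $H$ be a blowup of $G$ with $m$ vertices. If $\sigma'$ is a multiset of $m-n$ real numbers and $A\in\mathcal{S}(G)$ is a matrix none of whose diagonal entries belongs to $\sigma'$, then there is a matrix $A'\in\mathcal{S}(H)$ with spectrum $\operatorname{spec}(A)\cup\sigma'$ (union of multisets).
   Context: For a simple graph $G$ on $n$ vertices, $\mathcal{S}(G)$ is the set of all $n\times n$ real symmetric matrices $A=(a_{ij})$ such that for $i\neq j$, $a_{ij}\neq 0$ if and only if $\{i,j\}$ is an edge of $G$ (diagonal entries unrestricted). For a vertex $v$ of a graph and a positive integer $k$, the $k$-duplication of $v$ replaces $v$ by $k$ mutually adjacent vertices, each adjacent to exactly the neighbours of $v$ in $G-v$ (so the resulting graph has $|G|+k-1$ vertices; $1$-duplication does nothing). If $V(G)=\{v_1,\ldots,v_n\}$ and $m_1,\ldots,m_n$ are positive integers, the (closed) blowup of $G$ with respect to $m_1,\ldots,m_n$ is the graph obtained from $G$ by performing the $m_i$-duplication of $v_i$ for $i=1,\ldots,n$ sequentially; it has $\sum_i m_i$ vertices. *)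

(* Defs.v *)
From HB Require Import structures.
From mathcomp Require Import all_boot all_order all_algebra.
From mathcomp Require Import all_reals.
Set Implicit Arguments. Unset Strict Implicit. Unset Printing Implicit Defensive.
Import Order.TTheory GRing.Theory Num.Theory.


Definition simple_graph (n : nat) (G : rel 'I_n) : Prop :=
  (forall i j, G i j = G j i) /\ (forall i, ~~ G i i).

Definition in_SG (R : numDomainType) (n : nat) (G : rel 'I_n) (A : 'M[R]_n) : Prop :=
  (A^T = A)%R /\ (forall i j : 'I_n, i != j -> (A i j != 0%R) = G i j).

(* H (on 'I_m) is a (closed) blowup of G (on 'I_n), up to relabelling of
   vertices: there is a surjection f sending each vertex of H to the vertex
   of G it duplicates; the fibres f^-1(v_i) (of sizes m_i >= 1) are the
   cliques of copies of v_i, and two copies of distinct vertices are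
   adjacent iff the original vertices are adjacent in G. *)
Definition is_blowup (n m : nat) (G : rel 'I_n) (H : rel 'I_m) : Prop :=
  exists f : 'I_m -> 'I_n,
    (forall i : 'I_n, exists u : 'I_m, f u = i) /\
    (forall u v : 'I_m, u != v -> H u v = (f u == f v) || G (f u) (f v)).

(* s (a sequence, read up to permutation, i.e. a multiset) is the spectrum of
   the square matrix A: the characteristic polynomial of A splits as
   prod_(x in s) (X - x). *)
Definition spectrum_is (R : comNzRingType) (n : nat) (A : 'M[R]_n) (s : seq R) : Prop :=
  (char_poly A = \prod_(x <- s) ('X - x%:P))%R.

(* Main.v *)
Set Warnings "-notation-overridden,-ambiguous-paths".
Require Import Defs.
From HB Require Import structures.
From mathcomp Require Import all_boot all_order all_algebra.
From mathcomp Require Import all_reals.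
From mathcomp Require Import fingroup perm.
From mathcomp Require Import ring lra.
Import Order.TTheory GRing.Theory Num.Theory.
Set Implicit Arguments. Unset Strict Implicit. Unset Printing Implicit Defensive.
Local Open Scope ring_scope.

Lemma char_poly_simil (R : comNzRingType) n (P Q M : 'M[R]_n) :
  Q *m P = 1%:M -> char_poly (P *m M *m Q) = char_poly M.
Proof.
move=> QP; have PQ := mulmx1C QP.
rewrite /char_poly.
have -> : char_poly_mx (P *m M *m Q) =
   map_mx polyC P *m char_poly_mx M *m map_mx polyC Q.
  rewrite /char_poly_mx mulmxBr mulmxBl -!map_mxM; congr (_ - _).
  by rewrite scalar_mxC -mulmxA -map_mxM PQ map_mx1 mulmx1.
rewrite !det_mulmx mulrC mulrA -det_mulmx -map_mxM QP map_mx1 det1 mul1r.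
done.
Qed.

Lemma char_poly_block1 (R : comNzRingType) m (a : R) (B : 'M[R]_m) :
  char_poly (block_mx (a%:M : 'M_1) 0 0 B) = ('X - a%:P) * char_poly B.
Proof.
rewrite /char_poly char_block_diag_mx det_ublock; congr (_ * _).
rewrite /char_poly_mx map_scalar_mx det_mx11 !mxE eqxx /= !mulr1n.
done.
Qed.

Lemma sum_pick (R : nzRingType) n (x : 'I_n) (F : 'I_n -> R) :
  \sum_a (a == x)%:R * F a = F x.
Proof.
rewrite (bigD1 x) //= eqxx mul1r big1 ?addr0 // => a /negbTE ->; by rewrite mul0r.
Qed.

Definition ralpha (R : nzRingType) n (z w : 'I_n) (c : R) x : R :=
  if (x == z) || (x == w) then c else 1.
Definition rbeta (R : nzRingType) n (z w : 'I_n) (s : R) x : R :=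
  if x == z then s else if x == w then - s else 0.
Definition rotmx (R : nzRingType) n (z w : 'I_n) (c s : R) : 'M[R]_n :=
  \matrix_(x, a) ((a == x)%:R * ralpha z w c x + (a == tperm z w x)%:R * rbeta z w s x).

Lemma rotmx_mul (R : nzRingType) n (z w : 'I_n) (c s : R) (X : 'M[R]_n) x b :
  (rotmx z w c s *m X) x b =
  ralpha z w c x * X x b + rbeta z w s x * X (tperm z w x) b.
Proof.
rewrite !mxE; under eq_bigr do rewrite !mxE mulrDl -!mulrA.
by rewrite big_split /= !sum_pick.
Qed.

Lemma rotmx_conj (R : comNzRingType) n (z w : 'I_n) (c s : R) (M : 'M[R]_n) x y :
  M^T = M ->
  let a := ralpha z w c in let b := rbeta z w s in let t := tperm z w in
  (rotmx z w c s *m M *m (rotmx z w c s)^T) x y =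
  a x * (a y * M y x + b y * M (t y) x) + b x * (a y * M y (t x) + b y * M (t y) (t x)).
Proof.
move=> MT a b t.
have -> : rotmx z w c s *m M *m (rotmx z w c s)^T =
   rotmx z w c s *m (rotmx z w c s *m M)^T.
  by rewrite trmx_mul MT mulmxA.
by rewrite rotmx_mul ![(_^T) _ _]mxE !rotmx_mul.
Qed.

Lemma rotmx_orth (R : comNzRingType) n (z w : 'I_n) (c s : R) :
  z != w -> c ^+ 2 + s ^+ 2 = 1 ->
  (rotmx z w c s)^T *m rotmx z w c s = 1%:M.
Proof.
move=> zw cs; apply: mulmx1C.
have -> : rotmx z w c s *m (rotmx z w c s)^T =
  rotmx z w c s *m 1%:M *m (rotmx z w c s)^T by rewrite mulmx1.
apply/matrixP => x y; rewrite rotmx_conj ?tr_scalar_mx //= !mxE.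
rewrite /ralpha /rbeta.
have wz : w != z by rewrite eq_sym.
have [->|xz] := eqVneq x z; [|have [->|xw] := eqVneq x w];
have [->|yz] := eqVneq y z; try have [->|yw] := eqVneq y w;
rewrite ?tpermL ?tpermR ?tpermD 1?eq_sym // ?eqxx ?(negbTE zw) ?(negbTE wz)
  ?(negbTE xz) ?(negbTE xw) ?(negbTE yz) ?(negbTE yw) /=.
all: try rewrite ?(eq_sym z) ?(eq_sym w) ?(negbTE xz) ?(negbTE xw) ?(negbTE yz) ?(negbTE yw) ?(eq_sym y x).
all: rewrite /= ?mulr0n ?mulr1n ?mul0r ?mulr0 ?mul1r ?mulr1 ?addr0 ?add0r //.
all: try ring.
by rewrite -cs; ring.
Qed.

Definition bmx (R : nzRingType) m (lam : R) (B : 'M[R]_m) : 'M[R]_(1 + m) :=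
  block_mx (lam%:M : 'M_1) 0 0 B.

Lemma ord0_lshift m : (ord0 : 'I_(1 + m)) = lshift m ord0.
Proof. exact: val_inj. Qed.
Lemma lift0_rshift m (j : 'I_m) : (lift ord0 j : 'I_(1 + m)) = rshift 1 j.
Proof. exact: val_inj. Qed.

Lemma bmx00 (R : nzRingType) m (lam : R) (B : 'M[R]_m) : bmx lam B ord0 ord0 = lam.
Proof. by rewrite /bmx ord0_lshift block_mxEul mxE eqxx mulr1n. Qed.
Lemma bmx0l (R : nzRingType) m (lam : R) (B : 'M[R]_m) j : bmx lam B ord0 (lift ord0 j) = 0.
Proof. by rewrite /bmx lift0_rshift ord0_lshift block_mxEur mxE. Qed.
Lemma bmxl0 (R : nzRingType) m (lam : R) (B : 'M[R]_m) j : bmx lam B (lift ord0 j) ord0 = 0.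
Proof. by rewrite /bmx lift0_rshift ord0_lshift block_mxEdl mxE. Qed.
Lemma bmxll (R : nzRingType) m (lam : R) (B : 'M[R]_m) i j :
  bmx lam B (lift ord0 i) (lift ord0 j) = B i j.
Proof. by rewrite /bmx !lift0_rshift block_mxEdr. Qed.
Lemma bmx_sym (R : nzRingType) m (lam : R) (B : 'M[R]_m) : B^T = B -> (bmx lam B)^T = bmx lam B.
Proof. by move=> BT; rewrite /bmx tr_block_mx BT tr_scalar_mx !trmx0. Qed.

Definition rotN (R : comNzRingType) m (B : 'M[R]_m) (p : 'I_m) (lam c s : R) : 'M[R]_(1 + m) :=
  rotmx ord0 (lift ord0 p) c s *m bmx lam B *m (rotmx ord0 (lift ord0 p) c s)^T.

Ltac rotsimp :=
  rewrite /rotN rotmx_conj ?bmx_sym //= /ralpha /rbeta;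
  rewrite ?tpermL ?tpermR ?tpermD ?eqxx ?(inj_eq lift_inj) //=;
  rewrite ?(negbTE (neq_lift _ _)) ?(eq_sym ord0) ?(negbTE (neq_lift _ _)) /=;
  rewrite ?tpermL ?tpermR ?tpermD ?eqxx ?(inj_eq lift_inj) //= ?neq_lift 1?eq_sym ?neq_lift //;
  rewrite ?bmx00 ?bmx0l ?bmxl0 ?bmxll.

Lemma rotN00 (R : comNzRingType) m (B : 'M[R]_m) p lam c s : B^T = B ->
  rotN B p lam c s ord0 ord0 = c ^+ 2 * lam + s ^+ 2 * B p p.
Proof. by move=> BT; rotsimp; ring. Qed.
Lemma rotN0w (R : comNzRingType) m (B : 'M[R]_m) p lam c s : B^T = B ->
  rotN B p lam c s ord0 (lift ord0 p) = c * s * (B p p - lam).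
Proof. by move=> BT; rotsimp; ring. Qed.
Lemma rotNww (R : comNzRingType) m (B : 'M[R]_m) p lam c s : B^T = B ->
  rotN B p lam c s (lift ord0 p) (lift ord0 p) = s ^+ 2 * lam + c ^+ 2 * B p p.
Proof. by move=> BT; rotsimp; ring. Qed.
Lemma rotN0j (R : comNzRingType) m (B : 'M[R]_m) p lam c s j : B^T = B -> j != p ->
  rotN B p lam c s ord0 (lift ord0 j) = s * B j p.
Proof. move=> BT jp; have pj : (p == j) = false by rewrite eq_sym (negbTE jp).
by rotsimp; rewrite ?pj ?(negbTE jp); ring. Qed.
Lemma rotNwj (R : comNzRingType) m (B : 'M[R]_m) p lam c s j : B^T = B -> j != p ->
  rotN B p lam c s (lift ord0 p) (lift ord0 j) = c * B j p.
Proof. move=> BT jp; have pj : (p == j) = false by rewrite eq_sym (negbTE jp).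
by rotsimp; rewrite ?pj ?(negbTE jp); ring. Qed.
Lemma rotNij (R : comNzRingType) m (B : 'M[R]_m) p lam c s i j : B^T = B -> i != p -> j != p ->
  rotN B p lam c s (lift ord0 i) (lift ord0 j) = B j i.
Proof. move=> BT ip jp; have pj : (p == j) = false by rewrite eq_sym (negbTE jp).
have pi : (p == i) = false by rewrite eq_sym (negbTE ip).
by rotsimp; rewrite ?pj ?pi ?(negbTE jp) ?(negbTE ip); ring. Qed.

Lemma rotN_sym (R : comNzRingType) m (B : 'M[R]_m) p lam c s : B^T = B ->
  (rotN B p lam c s)^T = rotN B p lam c s.
Proof. by move=> BT; rewrite /rotN !trmx_mul trmxK bmx_sym // mulmxA. Qed.

Lemma rotN_char (R : comNzRingType) m (B : 'M[R]_m) p lam c s : c ^+ 2 + s ^+ 2 = 1 ->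
  char_poly (rotN B p lam c s) = ('X - lam%:P) * char_poly B.
Proof.
move=> cs; rewrite /rotN char_poly_simil ?rotmx_orth ?neq_lift //.
exact: char_poly_block1.
Qed.

Lemma avoid_list (R : realFieldType) (L : seq R) : exists t : R, 0 < t < 1 /\ t \notin L.
Proof.
have [mu [m0 [m1 m2]]] : exists mu : R,
    0 < mu /\ mu <= 1 /\ (forall y, y \in L -> 0 < y -> mu <= y).
  elim: L => [|y L [mu [IH1 [IH2 IH3]]]]; first by exists 1; split => //; split.
  have [y0|y0] := ltrP 0 y.
    exists (Num.min mu y); split; first by rewrite lt_min y0 IH1.
    split; first by rewrite ge_min IH2.
    move=> x; rewrite inE => /orP[/eqP -> _|xL x0]; first by rewrite ge_min lexx orbT.
    by rewrite ge_min IH3.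
  exists mu; split => //; split => // x; rewrite inE => /orP[/eqP -> x0|]; first lra.
  exact: IH3.
exists (mu / 2); split.
  apply/andP; split; first by rewrite divr_gt0.
  lra.
apply/negP => /m2 h; have : mu <= mu / 2 by apply: h; rewrite divr_gt0.
lra.
Qed.

Lemma choose_t (R : realFieldType) (a b : R) (F : seq R) : a != b ->
  exists t, 0 < t < 1 /\ t * a + (1 - t) * b \notin F /\ (1 - t) * a + t * b \notin F.
Proof.
move=> ab.
have [t [t01 tL]] := avoid_list ([seq (x - b) / (a - b) | x <- F] ++ [seq (x - a) / (b - a) | x <- F]).
have abn : a - b != 0 by rewrite subr_eq0.
have ban : b - a != 0 by rewrite subr_eq0 eq_sym.
exists t; split => //; split; apply/negP => hF; move/negP: tL; apply; rewrite mem_cat.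
  apply/orP; left; apply/mapP; eexists; first exact: hF.
  by field.
apply/orP; right; apply/mapP; eexists; first exact: hF.
by field.
Qed.

Definition pat (R : nzRingType) n m (G : rel 'I_n) (g : 'I_m -> 'I_n) (M : 'M[R]_m) : Prop :=
  forall u v, u != v -> (M u v != 0) = (g u == g v) || G (g u) (g v).

Definition ext n m (g : 'I_m -> 'I_n) (p : 'I_m) : 'I_(1 + m) -> 'I_n :=
  fun x => if unlift ord0 x is Some i then g i else g p.

Lemma step (R : rcfType) n (G : rel 'I_n) m (B : 'M[R]_m) (g : 'I_m -> 'I_n)
    (p : 'I_m) (lam : R) (F : seq R) :
  (forall i j, G i j = G j i) -> B^T = B -> pat G g B ->
  (forall i, B i i \notin lam :: F) ->
  exists N : 'M[R]_(1 + m), N^T = N /\ pat G (ext g p) N /\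
    (forall x, N x x \notin F) /\ char_poly N = ('X - lam%:P) * char_poly B.
Proof.
move=> Gsym BT Bpat Bdiag.
have bl : lam != B p p.
  by apply/negP => /eqP e; move: (Bdiag p); rewrite inE -e eqxx.
have [t [/andP [t0 t1] [tF1 tF2]]] := choose_t F bl.
pose c := Num.sqrt t; pose s := Num.sqrt (1 - t).
have c2 : c ^+ 2 = t by rewrite sqr_sqrtr // ltW.
have s2 : s ^+ 2 = 1 - t by rewrite sqr_sqrtr // subr_ge0 ltW.
have c0 : c != 0 by rewrite gt_eqF // sqrtr_gt0.
have s0 : s != 0 by rewrite gt_eqF // sqrtr_gt0 subr_gt0.
have flip : forall i j, (g i == g j) || G (g i) (g j) = (g j == g i) || G (g j) (g i).
  by move=> i j; rewrite eq_sym Gsym.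
have Bsym : forall i j, B i j = B j i.
  by move=> i j; rewrite -{1}BT mxE.
pose N := rotN B p lam c s.
have NT : N^T = N by exact: rotN_sym.
have Nsym : forall x y, N x y = N y x by move=> x y; rewrite -{1}NT mxE.
exists N; split => //; split; last split.
- have claim0 : forall j, (N ord0 (lift ord0 j) != 0) = (g p == g j) || G (g p) (g j).
    move=> j; have [->|jp] := eqVneq j p.
      rewrite /N rotN0w // eqxx /= !mulf_eq0 !negb_or c0 s0 /= subr_eq0 eq_sym.
      by rewrite bl.
    rewrite /N rotN0j // mulf_eq0 negb_or s0 /= Bpat 1?flip //.
  have claimL : forall i j, i != j ->
      (N (lift ord0 i) (lift ord0 j) != 0) = (g i == g j) || G (g i) (g j).
    move=> i j ij; have [ip|ip] := eqVneq i p.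
      subst i; have jp : j != p by rewrite eq_sym.
      by rewrite /N rotNwj // mulf_eq0 negb_or c0 /= Bpat // flip.
    have [jp|jp] := eqVneq j p.
      subst j; rewrite Nsym /N rotNwj // mulf_eq0 negb_or c0 /= Bpat //.
    by rewrite /N rotNij // Bpat 1?flip // eq_sym.
  move=> u v; case: (unliftP ord0 u) => [i ->|->]; case: (unliftP ord0 v) => [j ->|->].
  + by rewrite (inj_eq lift_inj) => ij; rewrite claimL // /ext !liftK.
  + by move=> _; rewrite Nsym claim0 /ext liftK unlift_none flip.
  + by move=> _; rewrite claim0 /ext liftK unlift_none.
  + by rewrite eqxx.
- move=> x; case: (unliftP ord0 x) => [i ->|->].
    have [->|ip] := eqVneq i p.
      rewrite /N rotNww // c2 s2; exact: tF2.
    rewrite /N rotNij //; move: (Bdiag i); rewrite inE negb_or => /andP[].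
    by [].
  by rewrite /N rotN00 // c2 s2.
- by rewrite /N rotN_char // c2 s2 addrC subrK.
Qed.

Definition relabel (R : nzRingType) m (s : {perm 'I_m}) (M : 'M[R]_m) : 'M[R]_m :=
  \matrix_(x, y) M (s x) (s y).

Lemma relabel_sym (R : nzRingType) m s (M : 'M[R]_m) : M^T = M -> (relabel s M)^T = relabel s M.
Proof. by move=> MT; apply/matrixP => x y; rewrite !mxE -{1}MT mxE. Qed.

Lemma relabel_pat (R : nzRingType) n m (G : rel 'I_n) g (s : {perm 'I_m}) (M : 'M[R]_m) :
  pat G g M -> pat G (fun x => g (s x)) (relabel s M).
Proof. by move=> P u v uv; rewrite mxE P // (inj_eq perm_inj). Qed.

Lemma pat_ext (R : nzRingType) n m (G : rel 'I_n) g g' (M : 'M[R]_m) :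
  g =1 g' -> pat G g M -> pat G g' M.
Proof. by move=> e P u v uv; rewrite -!e P. Qed.

Lemma relabel_char (R : comNzRingType) m (s : {perm 'I_m}) (M : 'M[R]_m) :
  char_poly (relabel s M) = char_poly M.
Proof.
have -> : relabel s M = perm_mx s *m M *m perm_mx s^-1.
  rewrite -row_permE -col_permE; apply/matrixP => x y; by rewrite !mxE.
by rewrite char_poly_simil // -perm_mxM mulVg perm_mx1.
Qed.

Lemma surj_inj n (f : 'I_n -> 'I_n) : (forall i, exists u, f u = i) -> injective f.
Proof.
move=> hs.
have hex : forall i, exists u, f u == i by move=> i; have [u <-] := hs i; exists u.
pose h i := xchoose (hex i).
have fh : forall i, f (h i) = i by move=> i; apply/eqP; exact: (xchooseP (hex i)).
have hinj : injective h by apply: (can_inj fh).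
have [h' hh' h'h] := injF_bij hinj.
have fe : f =1 h' by move=> x; rewrite -{1}(h'h x) fh.
by move=> x y; rewrite !fe => /(can_inj h'h).
Qed.

Lemma main (R : rcfType) n (G : rel 'I_n) (A : 'M[R]_n) :
  (forall i j, G i j = G j i) -> A^T = A -> pat G id A ->
  forall k m (f : 'I_m -> 'I_n) (sg F : seq R), m = (n + k)%N ->
  (forall i, exists u, f u = i) -> size sg = k ->
  (forall i, A i i \notin F ++ sg) ->
  exists A' : 'M[R]_m, A'^T = A' /\ pat G f A' /\ (forall u, A' u u \notin F) /\
    char_poly A' = char_poly A * \prod_(x <- sg) ('X - x%:P).
Proof.
move=> Gsym AT Apat; elim=> [|k IH] m f sg F e fs sz hA.
  rewrite addn0 in e; subst m.
  have finj := surj_inj fs.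
  pose s := perm finj.
  exists (relabel s A); split; first exact: relabel_sym.
  split; first by apply: (pat_ext _ (relabel_pat s Apat)) => x; rewrite permE.
  case: sg sz hA => // _ hA.
  split; first by move=> u; rewrite mxE; move: (hA (s u)); rewrite cats0.
  by rewrite relabel_char big_nil mulr1.
case: sg sz hA => // lam sg [sz] hA.
rewrite addnS in e; subst m.
have [q [p qp fqp]] : exists q, exists2 p, q != p & f q = f p.
  apply/injectivePn; apply/negP => /injectiveP finj.
  by move: (leq_card f finj); rewrite !card_ord ltnNge leq_addr.
pose phi := tperm (ord0 : 'I_(n + k).+1) q.
have phiK : forall x, phi (phi x) = x by move=> x; rewrite tpermK.
have phi0 : forall w, w != q -> exists j, phi w = lift ord0 j.
  move=> w wq; case: (unliftP ord0 (phi w)) => [j ->|e]; first by exists j.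
  by move: wq; rewrite -[X in X != q]phiK e /phi tpermL eqxx.
pose f' := fun u : 'I_(n + k) => f (phi (lift ord0 u)).
have f's : forall i, exists u, f' u = i.
  move=> i; have [u fu] := fs i.
  have [w [wq fw]] : exists w, w != q /\ f w = i.
    have [uq|uq] := eqVneq u q; last by exists u.
    by exists p; rewrite eq_sym qp -fqp -uq.
  have [j ej] := phi0 w wq; exists j; by rewrite /f' -ej phiK.
have pq : p != q by rewrite eq_sym.
have [p' ep'] := phi0 p pq.
have hA' : forall i, A i i \notin (lam :: F) ++ sg.
  move=> i; move: (hA i); apply: contra; rewrite !mem_cat !inE.
  by case/orP => [/orP[->|->]|->]; rewrite ?orbT.
have [B [BT [Bpat [Bdiag Bchar]]]] := IH _ f' sg (lam :: F) erefl f's sz hA'.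
have [N [NT [Npat [Ndiag Nchar]]]] := step p' Gsym BT Bpat Bdiag.
exists (relabel phi N); split; first exact: relabel_sym.
split.
  apply: (pat_ext _ (relabel_pat phi Npat)) => x.
  rewrite /ext; have [xq|xq] := eqVneq x q.
    by subst x; rewrite tpermR unlift_none /f' -ep' phiK fqp.
  have [j ej] := phi0 x xq; by rewrite ej liftK /f' -ej phiK.
split; first by move=> u; rewrite mxE.
by rewrite relabel_char Nchar Bchar big_cons mulrCA.
Qed.

Lemma surj_le n m (f : 'I_m -> 'I_n) : (forall i, exists u, f u = i) -> (n <= m)%N.
Proof.
move=> hs.
have hex : forall i, exists u, f u == i by move=> i; have [u <-] := hs i; exists u.
pose h i := xchoose (hex i).
have fh : forall i, f (h i) = i by move=> i; apply/eqP; exact: (xchooseP (hex i)).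
have hinj : injective h by apply: (can_inj fh).
by move: (leq_card h hinj); rewrite !card_ord.
Qed.

Theorem lemma2p4 (R : realType) (n m : nat) (G : rel 'I_n) (H : rel 'I_m)
    (sigma' : seq R) (A : 'M[R]_n) :
  simple_graph G -> simple_graph H -> is_blowup G H ->
  size sigma' = (m - n)%N ->
  in_SG G A ->
  (forall i : 'I_n, A i i \notin sigma') ->
  exists A' : 'M[R]_m,
    in_SG H A' /\
    (forall s : seq R, spectrum_is A s -> spectrum_is A' (s ++ sigma')).
Proof.
move=> [Gsym Girr] _ [f [fs fH]] sz [AT Apat] hA.
have Apat' : pat G id A.
  by move=> u v uv; rewrite Apat // (negbTE uv).
have e : m = (n + (m - n))%N by rewrite subnKC // (surj_le fs).
have [A' [A'T [A'pat [_ A'char]]]] :=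
  main Gsym AT Apat' e fs sz (F := [::]) hA.
exists A'; split.
  by split => // u v uv; rewrite A'pat // fH.
by move=> s; rewrite /spectrum_is A'char => ->; rewrite big_cat.
Qed.
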